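(* Let $0<q<1\le p$, $A\in\mathbb{R}^{m\times n}$, $\bar{x}\in\mathbb{R}^n$, $b:=A\bar{x}$, and let $S$ be the number of nonzero groups of $\bar{x}$. Suppose every nonzero group of $\bar{x}$ is active, and the columns of $A$ indexed by the nonzero components of $\bar{x}$ are linearly independent; let $B$ be the submatrix of $A$ formed by these columns. Then there exist $\kappa>0$ and, for each $\lambda\in(0,\kappa)$, a local minimizer $x^*(\lambda)$ of $F_\lambda(x):=\|Ax-b\|_2^2+\lambda\|x\|_{p,q}^q$ such that $$\|x^*(\lambda)-\bar{x}\|_2^2\le\lambda^2q^2S\,\|(B^\top B)^{-1}\|^2\max_{i:\bar{x}_{\mathcal{G}_i}\ne0}\Big(\|\bar{x}_{\mathcal{G}_i}\|_p^{2(q-p)}\sum_{j\in\mathcal{G}_i}|\bar{x}_j|^{2p-2}\Big)\quad\text{for all }\lambda\in(0,\kappa).$$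
   Context: Group structure: $\{1,\dots,n\}$ is partitioned into disjoint nonempty index sets $\mathcal{G}_1,\dots,\mathcal{G}_r$; $x_{\mathcal{G}_i}$ is the subvector indexed by $\mathcal{G}_i$; $\|x\|_{p,q}:=(\sum_{i=1}^r\|x_{\mathcal{G}_i}\|_p^q)^{1/q}$. A group $x_{\mathcal{G}_i}$ is nonzero if some component is nonzero, and active if all its components are nonzero. $\|\cdot\|$ for a matrix is the spectral (operator 2-) norm. *)

(* Defs.v *)
From Stdlib Require Import Reals Lra ClassicalEpsilon.
Open Scope R_scope.

(* Vectors in R^n are functions nat -> R (only indices < n matter);
   m x n matrices are functions nat -> nat -> R. *)

Fixpoint fsum (n : nat) (f : nat -> R) : R :=
  match n with O => 0 | S k => fsum k f + f k end.

Fixpoint fmax (n : nat) (f : nat -> R) : R :=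
  match n with O => 0 | S k => Rmax (fmax k f) (f k) end.

(* real power t^a for t >= 0, with the convention 0^a = 0 (used for a > 0) *)
Definition rpow (t a : R) : R := if Rle_dec t 0 then 0 else Rpower t a.

(* Group structure: g j is the index of the group containing j; the groups are
   G_i = { j < n | g j = i }, i < r. *)
Definition is_partition (n r : nat) (g : nat -> nat) : Prop :=
  (forall j, (j < n)%nat -> (g j < r)%nat) /\
  (forall i, (i < r)%nat -> exists j, (j < n)%nat /\ g j = i).

Definition gnorm (n : nat) (g : nat -> nat) (p : R) (x : nat -> R) (i : nat) : R :=
  rpow (fsum n (fun j => if Nat.eqb (g j) i then rpow (Rabs (x j)) p else 0)) (1 / p).

Definition pq_q (n r : nat) (g : nat -> nat) (p q : R) (x : nat -> R) : R :=
  fsum r (fun i => rpow (gnorm n g p x i) q).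

Definition group_nonzero (n : nat) (g : nat -> nat) (x : nat -> R) (i : nat) : Prop :=
  exists j, (j < n)%nat /\ g j = i /\ x j <> 0.

Definition group_active (n : nat) (g : nat -> nat) (x : nat -> R) (i : nat) : Prop :=
  forall j, (j < n)%nat -> g j = i -> x j <> 0.

Definition num_nonzero_groups (n r : nat) (g : nat -> nat) (x : nat -> R) : R :=
  fsum r (fun i => if excluded_middle_informative (group_nonzero n g x i) then 1 else 0).

Definition matvec (n : nat) (A : nat -> nat -> R) (x : nat -> R) : nat -> R :=
  fun l => fsum n (fun k => A l k * x k).

Definition norm2sq (n : nat) (v : nat -> R) : R := fsum n (fun j => v j ^ 2).

Definition Flam (m n r : nat) (g : nat -> nat) (p q : R) (A : nat -> nat -> R)
  (xbar : nat -> R) (lam : R) (x : nat -> R) : R :=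
  norm2sq m (fun l => matvec n A x l - matvec n A xbar l) + lam * pq_q n r g p q x.

Definition local_minimizer (n : nat) (f : (nat -> R) -> R) (x : nat -> R) : Prop :=
  exists delta, 0 < delta /\
    forall y, norm2sq n (fun j => y j - x j) < delta ^ 2 -> f x <= f y.

Definition supp (xbar : nat -> R) (j : nat) : bool :=
  if Req_EM_T (xbar j) 0 then false else true.

Definition gram (m : nat) (A : nat -> nat -> R) (j k : nat) : R :=
  fsum m (fun l => A l j * A l k).

(* C is the inverse of B^T B, where B = columns of A indexed by T;
   matrices over T x T are represented by their entries at indices in T. *)
Definition is_inverse_on_supp (m n : nat) (A : nat -> nat -> R) (xbar : nat -> R)
  (C : nat -> nat -> R) : Prop :=
  forall i k, (i < n)%nat -> (k < n)%nat -> supp xbar i = true -> supp xbar k = true ->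
    fsum n (fun j => if supp xbar j then C i j * gram m A j k else 0)
      = (if Nat.eqb i k then 1 else 0) /\
    fsum n (fun j => if supp xbar j then gram m A i j * C j k else 0)
      = (if Nat.eqb i k then 1 else 0).

Definition supp_norm (n : nat) (xbar v : nat -> R) : R :=
  sqrt (fsum n (fun j => if supp xbar j then v j ^ 2 else 0)).

Definition spec_set (n : nat) (xbar : nat -> R) (C : nat -> nat -> R) : R -> Prop :=
  fun t => exists v, supp_norm n xbar v <= 1 /\
    t = supp_norm n xbar (fun i => fsum n (fun j => if supp xbar j then C i j * v j else 0)).

Definition spec_norm (n : nat) (xbar : nat -> R) (C : nat -> nat -> R) : R :=
  epsilon (inhabits 0) (fun c => is_lub (spec_set n xbar C) c).

Definition max_term (n r : nat) (g : nat -> nat) (p q : R) (xbar : nat -> R) : R :=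
  fmax r (fun i =>
    if excluded_middle_informative (group_nonzero n g xbar i) then
      rpow (gnorm n g p xbar i) (2 * (q - p)) *
      fsum n (fun j => if Nat.eqb (g j) i then rpow (Rabs (xbar j)) (2 * p - 2) else 0)
    else 0).

(* Main.v *)
Require Import Defs.
From Stdlib Require Import Reals Lra ClassicalEpsilon.
Open Scope R_scope.
From Stdlib Require Import Lia Classical FunctionalExtensionality.
From mathcomp Require all_boot all_order all_algebra all_classical all_reals all_analysis Rstruct Rstruct_topology.
Module MC.
From mathcomp Require Import all_boot all_order all_algebra.
From mathcomp Require Import all_classical all_reals all_analysis.
From mathcomp Require Import Rstruct Rstruct_topology.
Import all_boot all_order all_algebra all_classical all_reals all_analysis Rstruct Rstruct_topology.
Import Order.TTheory GRing.Theory Num.Theory.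
Import numFieldNormedType.Exports.
Local Open Scope classical_set_scope.
Local Open Scope ring_scope.

Lemma EVT_box (n : nat) (F : 'rV[R]_n -> R) (lo hi : 'I_n -> R) :
  (forall i, Rle (lo i) (hi i)) ->
  (forall (x : 'rV[R]_n) eps, Rlt 0 eps -> exists d, Rlt 0 d /\ forall (y : 'rV[R]_n),
      (forall i, Rlt (Rabs (Rminus (y ord0 i) (x ord0 i))) d) ->
      Rlt (Rabs (Rminus (F y) (F x))) eps) ->
  exists c : 'rV[R]_n, (forall i, Rle (lo i) (c ord0 i) /\ Rle (c ord0 i) (hi i)) /\
     forall v : 'rV[R]_n, (forall i, Rle (lo i) (v ord0 i) /\ Rle (v ord0 i) (hi i)) -> Rle (F c) (F v).
Proof.
move=> lohi Fc.
pose A := [set v : 'rV[R]_n | forall i, `[lo i, hi i]%classic (v ord0 i)].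
have A0 : A !=set0.
  exists (\row_i lo i) => i /=; rewrite mxE in_itv /= lexx /=; exact/RleP.
have cA : compact A.
  by apply: (@rV_compact _ _ (fun i => `[lo i, hi i]%classic)) => i; exact: segment_compact.
have cF : continuous F.
  move=> x; apply/(@cvg_ballP _ _ _ (nbhs x) (nbhs_filter x)) => e /RltP e0.
  have [d [/RltP d0 Hd]] := Fc x e e0.
  apply/nbhs_ballP; exists d => //= y xy.
  rewrite /ball /= -RabsE -Rabs_Ropp Ropp_minus_distr; apply/RltP; apply: Hd => i.
  move: xy => [_ /(_ ord0 i)]; rewrite /ball /= -RabsE => /RltP.
  by rewrite -Rabs_Ropp Ropp_minus_distr.
have [c cA' cmin] := EVT_min_rV A0 cA (continuous_subspaceT cF).
exists c; split.
  move=> i; move: cA'; rewrite inE => /(_ i); rewrite /= in_itv /= => /andP[/RleP h1 /RleP h2]; by [].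
move=> v vA; apply/RleP; apply: cmin; rewrite inE => i /=; rewrite in_itv /=.
by have [h1 h2] := vA i; apply/andP; split; apply/RleP.
Qed.

Definition toV n (v : 'rV[R]_n) : nat -> R :=
  fun j => match (insub j : option 'I_n) with Some i => v ord0 i | None => 0 end.

Arguments toV {n}.
Lemma toV_lt n (v : 'rV[R]_n) (i : 'I_n) : toV v i = v ord0 i.
Proof. by rewrite /toV valK. Qed.

Lemma toV_ge n (v : 'rV[R]_n) j : (n <= j)%N -> toV v j = 0.
Proof. by move=> h; rewrite /toV insubF // ltnNge h. Qed.

Arguments toV_lt {n}.
Arguments toV_ge {n}.
Local Close Scope ring_scope.
Lemma EVT_nat (n:nat) (f : (nat -> R) -> R) (lo hi : nat -> R) :
 (forall j, Rle (lo j) (hi j)) ->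
 (forall x eps, Rlt 0 eps -> exists d, Rlt 0 d /\ forall y,
    (forall j, (j < n)%coq_nat -> Rlt (Rabs (Rminus (y j) (x j))) d) -> Rlt (Rabs (Rminus (f y) (f x))) eps) ->
 exists z, and (forall j, (j < n)%coq_nat -> Rle (lo j) (z j) /\ Rle (z j) (hi j))
   (and (forall j, (n <= j)%coq_nat -> z j = 0)
   (forall y, (forall j, (j < n)%coq_nat -> Rle (lo j) (y j) /\ Rle (y j) (hi j)) ->
     (forall j, (n <= j)%coq_nat -> y j = 0) -> Rle (f z) (f y))).
Proof.
move=> lohi fc.
have Fc : forall (x : 'rV[R]_n) eps, Rlt 0 eps -> exists d, Rlt 0 d /\ forall (y : 'rV[R]_n),
      (forall i, Rlt (Rabs (Rminus (y ord0 i) (x ord0 i))) d) ->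
      Rlt (Rabs (Rminus (f (toV y)) (f (toV x)))) eps.
  move=> x eps e0; have [d [d0 Hd]] := fc (toV x) eps e0; exists d; split => // y Hy.
  apply: Hd => j /ssrnat.ltP hj; rewrite (toV_lt y (Ordinal hj)) (toV_lt x (Ordinal hj)); exact: Hy.
have [c [cb cmin]] := @EVT_box n (fun v => f (toV v)) (fun i => lo i) (fun i => hi i) (fun i => lohi i) Fc.
exists (toV c); split; [|split].
+ move=> j /ssrnat.ltP hj; have := cb (Ordinal hj); by rewrite -(toV_lt c (Ordinal hj)).
+ by move=> j /ssrnat.leP hj; rewrite toV_ge.
+ move=> y yb y0; have -> : y = toV (\row_(i < n) y i).
    apply: functional_extensionality_dep => j; case: (ltnP j n) => hj.
    * by rewrite (toV_lt _ (Ordinal hj)) mxE.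
    * by rewrite toV_ge // y0 //; apply/ssrnat.leP.
  apply: cmin => i; rewrite mxE; exact: yb (ssrnat.ltP (ltn_ord i)).
Qed.
End MC.
Notation EVT_nat := MC.EVT_nat.

Lemma fsum_ext n F G : (forall j, (j < n)%nat -> F j = G j) -> fsum n F = fsum n G.
Proof. induction n; simpl; intros H; auto. rewrite IHn by (intros; apply H; lia). rewrite H by lia. auto. Qed.

Lemma fsum_plus n F G : fsum n (fun j => F j + G j) = fsum n F + fsum n G.
Proof. induction n; simpl; [ring|]. rewrite IHn; ring. Qed.

Lemma fsum_minus n F G : fsum n (fun j => F j - G j) = fsum n F - fsum n G.
Proof. induction n; simpl; [ring|]. rewrite IHn; ring. Qed.

Lemma fsum_scal n c F : fsum n (fun j => c * F j) = c * fsum n F.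
Proof. induction n; simpl; [ring|]. rewrite IHn; ring. Qed.

Lemma fsum_scal_r n c F : fsum n (fun j => F j * c) = fsum n F * c.
Proof. induction n; simpl; [ring|]. rewrite IHn; ring. Qed.

Lemma fsum_le n F G : (forall j, (j < n)%nat -> F j <= G j) -> fsum n F <= fsum n G.
Proof. induction n; simpl; intros H; [lra|]. assert (F n <= G n) by (apply H; lia).
  assert (fsum n F <= fsum n G) by (apply IHn; intros; apply H; lia). lra. Qed.

Lemma fsum_nonneg n F : (forall j, (j < n)%nat -> 0 <= F j) -> 0 <= fsum n F.
Proof. intros H. replace 0 with (fsum n (fun _ => 0)). apply fsum_le; auto.
  induction n; simpl; auto. rewrite IHn; [ring|]. intros; apply H; lia. Qed.

Lemma fsum_zero n F : (forall j, (j < n)%nat -> F j = 0) -> fsum n F = 0.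
Proof. induction n; simpl; intros H; auto. rewrite IHn, H by (intros; try apply H; lia). ring. Qed.

Lemma fsum_single_le n F k : (forall j, (j < n)%nat -> 0 <= F j) -> (k < n)%nat -> F k <= fsum n F.
Proof. induction n; simpl; intros H Hk; [lia|].
  assert (0 <= fsum n F) by (apply fsum_nonneg; intros; apply H; lia).
  destruct (Nat.eq_dec k n). subst. lra.
  assert (F k <= fsum n F) by (apply IHn; [intros; apply H; lia| lia]).
  assert (0 <= F n) by (apply H; lia). lra. Qed.

Lemma fsum_delta n k F : (k < n)%nat -> fsum n (fun j => if Nat.eqb j k then F j else 0) = F k.
Proof. induction n; simpl; intros Hk; [lia|].
  destruct (Nat.eq_dec k n).
  - subst. rewrite Nat.eqb_refl. rewrite fsum_zero. ring. intros j Hj.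
    destruct (Nat.eqb_spec j n); [lia|auto].
  - destruct (Nat.eqb_spec n k); [lia|]. rewrite IHn by lia. ring. Qed.

Lemma fsum_delta' n k F : (k < n)%nat -> fsum n (fun j => if Nat.eqb k j then F j else 0) = F k.
Proof. intros Hk. rewrite <- (fsum_delta n k F Hk). apply fsum_ext. intros j _.
  rewrite Nat.eqb_sym. auto. Qed.

Lemma fsum_change1 n k F G : (k < n)%nat -> (forall j, (j < n)%nat -> j <> k -> G j = F j) ->
  fsum n G = fsum n F - F k + G k.
Proof. intros Hk H.
  assert (E: forall j, (j<n)%nat -> G j = F j + (if Nat.eqb j k then G j - F j else 0)).
  { intros j Hj. destruct (Nat.eqb_spec j k). subst; ring. rewrite H by auto. ring. }
  rewrite (fsum_ext n G _ E), fsum_plus.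
  rewrite (fsum_delta n k (fun j => G j - F j)) by auto. ring. Qed.

Lemma fsum_swap n m (F : nat -> nat -> R) :
  fsum n (fun i => fsum m (fun j => F i j)) = fsum m (fun j => fsum n (fun i => F i j)).
Proof. induction n; simpl.
  - rewrite fsum_zero; auto.
  - rewrite IHn. rewrite <- fsum_plus. auto. Qed.

Lemma fsum_abs n F : Rabs (fsum n F) <= fsum n (fun j => Rabs (F j)).
Proof. induction n; simpl. rewrite Rabs_R0; lra.
  eapply Rle_trans. apply Rabs_triang. lra. Qed.

Lemma fsum_regroup n r (g : nat -> nat) F : (forall j, (j < n)%nat -> (g j < r)%nat) ->
  fsum n F = fsum r (fun i => fsum n (fun j => if Nat.eqb (g j) i then F j else 0)).
Proof. intros H. rewrite fsum_swap. apply fsum_ext. intros j Hj.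
  rewrite (fsum_delta' r (g j) (fun _ => F j)) by auto. auto. Qed.

Lemma fsum_if n (b : nat -> bool) F : fsum n (fun j => if b j then F j else 0) =
  fsum n (fun j => if b j then F j else 0). Proof. auto. Qed.

Lemma fmax_ge r f k : (k < r)%nat -> f k <= fmax r f.
Proof. induction r; simpl; intros Hk; [lia|]. destruct (Nat.eq_dec k r).
  subst; apply Rmax_r. eapply Rle_trans; [apply IHr; lia| apply Rmax_l]. Qed.

Lemma fmax_nonneg r f : 0 <= fmax r f.
Proof. induction r; simpl; [lra|]. eapply Rle_trans; [apply IHr| apply Rmax_l]. Qed.

Lemma cont_pt_iff f x : continuity_pt f x <->
  (forall eps, 0 < eps -> exists d, 0 < d /\ forall y, Rabs (y - x) < d -> Rabs (f y - f x) < eps).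
Proof. unfold continuity_pt, continue_in, limit1_in, limit_in; simpl; unfold R_dist, D_x, no_cond.
  split.
  - intros H eps He. destruct (H eps He) as [d [Hd H']]. exists d; split; auto.
    intros y Hy. destruct (Req_dec y x). subst. rewrite Rminus_diag, Rabs_R0; auto.
    apply H'. split; auto.
  - intros H eps He. destruct (H eps He) as [d [Hd H']]. exists d; split; auto.
    intros y [_ Hy]. auto. Qed.

Lemma rpow_nonneg t a : 0 <= rpow t a.
Proof. unfold rpow. destruct (Rle_dec t 0). lra. unfold Rpower. left; apply exp_pos. Qed.

Lemma rpow_pos t a : 0 < t -> rpow t a = Rpower t a.
Proof. unfold rpow. destruct (Rle_dec t 0); auto. lra. Qed.

Lemma rpow_le0 t a : t <= 0 -> rpow t a = 0.
Proof. unfold rpow. destruct (Rle_dec t 0); auto. lra. Qed.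

Lemma Rpower_pos t a : 0 < Rpower t a.
Proof. unfold Rpower; apply exp_pos. Qed.

Lemma rpow_pos_pos t a : 0 < t -> 0 < rpow t a.
Proof. intros; rewrite rpow_pos; auto; apply Rpower_pos. Qed.

Lemma rpow_mono e s t : 0 < e -> s <= t -> rpow s e <= rpow t e.
Proof. intros He Hst. destruct (Rle_dec s 0).
  rewrite rpow_le0 by auto. apply rpow_nonneg.
  rewrite !rpow_pos by lra. apply Rle_Rpower_l; [lra| split; lra]. Qed.

Lemma rpow_rpow t a b : 0 < a -> rpow (rpow t a) b = rpow t (a * b).
Proof. intros Ha. destruct (Rle_dec t 0).
  rewrite !(rpow_le0 t) by auto. apply rpow_le0; lra.
  rewrite (rpow_pos t a) by lra. rewrite (rpow_pos (Rpower t a)) by apply Rpower_pos.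
  rewrite (rpow_pos t) by lra. apply Rpower_mult. Qed.

Lemma rpow_inv t p : 0 <= t -> 0 < p -> rpow (rpow t p) (1 / p) = t.
Proof. intros Ht Hp. rewrite rpow_rpow by auto. destruct (Req_dec t 0).
  subst; apply rpow_le0; lra. rewrite rpow_pos by lra.
  replace (p * (1/p)) with 1 by (field; lra). apply Rpower_1; lra. Qed.

Lemma Rpower_le_neg a b c : c <= 0 -> 0 < a <= b -> Rpower b c <= Rpower a c.
Proof. intros Hc [Ha Hab]. unfold Rpower. destruct (Req_dec a b). subst; lra.
  assert (ln a < ln b) by (apply ln_increasing; lra).
  destruct (Req_dec c 0). subst. rewrite !Rmult_0_l. lra.
  left. apply exp_increasing. nra. Qed.

Lemma rpow_cont a : 0 < a -> forall x, continuity_pt (fun t => rpow t a) x.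
Proof. intros Ha x. apply cont_pt_iff. intros eps He.
  destruct (Rlt_dec 0 x) as [Hx|Hx].
  - assert (Hc: continuity_pt (fun t => Rpower t a) x).
    { apply derivable_continuous_pt. exists (a * Rpower x (a - 1)). apply derivable_pt_lim_power; auto. }
    rewrite cont_pt_iff in Hc. destruct (Hc eps He) as [d [Hd H]].
    exists (Rmin d x). split. apply Rmin_pos; auto. intros y Hy.
    assert (Rabs (y - x) < d) by (eapply Rlt_le_trans; [apply Hy| apply Rmin_l]).
    assert (Rabs (y - x) < x) by (eapply Rlt_le_trans; [apply Hy| apply Rmin_r]).
    rewrite !rpow_pos. apply H; auto. auto. apply Rabs_def2 in H1. lra.
  - destruct (Rlt_dec x 0) as [Hx'|Hx'].
    + exists (-x). split. lra. intros y Hy. apply Rabs_def2 in Hy.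
      rewrite !rpow_le0 by lra. rewrite Rminus_diag, Rabs_R0. auto.
    + assert (x = 0) by lra. subst x.
      exists (Rpower eps (1/a)). split. apply Rpower_pos. intros y Hy.
      rewrite (rpow_le0 0) by lra. rewrite Rminus_0_r. rewrite Rminus_0_r in Hy.
      rewrite Rabs_pos_eq by apply rpow_nonneg.
      destruct (Rle_dec y 0). rewrite rpow_le0; auto.
      rewrite rpow_pos by lra. rewrite Rabs_pos_eq in Hy by lra.
      replace eps with (Rpower (Rpower eps (1/a)) a).
      apply Rlt_Rpower_l; auto. lra.
      rewrite Rpower_mult. replace (1/a*a) with 1 by (field; lra). apply Rpower_1; auto. Qed.

Definition Cts (n : nat) (f : (nat -> R) -> R) : Prop :=
  forall x eps, 0 < eps -> exists d, 0 < d /\ forall y,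
    (forall j, (j < n)%nat -> Rabs (y j - x j) < d) -> Rabs (f y - f x) < eps.

Lemma Cts_const n c : Cts n (fun _ => c).
Proof. intros x eps He. exists 1. split. lra. intros. rewrite Rminus_diag, Rabs_R0; auto. Qed.

Lemma Cts_coord n j : (j < n)%nat -> Cts n (fun x => x j).
Proof. intros Hj x eps He. exists eps. split; auto. Qed.

Lemma Cts_plus n f g : Cts n f -> Cts n g -> Cts n (fun x => f x + g x).
Proof. intros Hf Hg x eps He.
  destruct (Hf x (eps/2)) as [d1 [Hd1 H1]]. lra.
  destruct (Hg x (eps/2)) as [d2 [Hd2 H2]]. lra.
  exists (Rmin d1 d2). split. apply Rmin_pos; auto. intros y Hy.
  assert (A1 := H1 y (fun j Hj => Rlt_le_trans _ _ _ (Hy j Hj) (Rmin_l _ _))).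
  assert (A2 := H2 y (fun j Hj => Rlt_le_trans _ _ _ (Hy j Hj) (Rmin_r _ _))).
  replace (f y + g y - (f x + g x)) with ((f y - f x) + (g y - g x)) by ring.
  eapply Rle_lt_trans. apply Rabs_triang. lra. Qed.

Lemma Cts_comp n f (phi : R -> R) : (forall t, continuity_pt phi t) -> Cts n f -> Cts n (fun x => phi (f x)).
Proof. intros Hphi Hf x eps He.
  destruct (proj1 (cont_pt_iff phi (f x)) (Hphi (f x)) eps He) as [d1 [Hd1 H1]].
  destruct (Hf x d1 Hd1) as [d [Hd H]]. exists d. split; auto. Qed.

Lemma Cts_mult n f g : Cts n f -> Cts n g -> Cts n (fun x => f x * g x).
Proof. intros Hf Hg x eps He.
  set (M := Rabs (f x) + Rabs (g x) + 1).
  assert (HM: 0 < M) by (unfold M; pose proof (Rabs_pos (f x)); pose proof (Rabs_pos (g x)); lra).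
  set (e1 := Rmin 1 (eps / (4 * M))).
  assert (He1: 0 < e1) by (apply Rmin_pos; [lra| apply Rdiv_lt_0_compat; lra]).
  destruct (Hf x e1 He1) as [d1 [Hd1 H1]].
  destruct (Hg x e1 He1) as [d2 [Hd2 H2]].
  exists (Rmin d1 d2). split. apply Rmin_pos; auto. intros y Hy.
  assert (A1 := H1 y (fun j Hj => Rlt_le_trans _ _ _ (Hy j Hj) (Rmin_l _ _))).
  assert (A2 := H2 y (fun j Hj => Rlt_le_trans _ _ _ (Hy j Hj) (Rmin_r _ _))).
  replace (f y * g y - f x * g x) with ((f y - f x) * g y + f x * (g y - g x)) by ring.
  assert (e1 <= 1) by apply Rmin_l. assert (e1 <= eps / (4*M)) by apply Rmin_r.
  assert (Rabs (g y) <= Rabs (g x) + 1).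
  { replace (g y) with (g x + (g y - g x)) by ring. eapply Rle_trans. apply Rabs_triang. lra. }
  eapply Rle_lt_trans. apply Rabs_triang. rewrite !Rabs_mult.
  assert (Rabs (f y - f x) * Rabs (g y) <= e1 * M).
  { apply Rmult_le_compat; try apply Rabs_pos; unfold M; pose proof (Rabs_pos (f x)); lra. }
  assert (Rabs (f x) * Rabs (g y - g x) <= M * e1).
  { apply Rmult_le_compat; try apply Rabs_pos; unfold M; pose proof (Rabs_pos (g x)); lra. }
  assert (e1 * M <= eps / 4).
  { replace (eps/4) with (eps / (4*M) * M) by (field; lra). apply Rmult_le_compat_r; lra. }
  lra. Qed.

Lemma Cts_fsum n k (F : nat -> (nat -> R) -> R) : (forall i, (i < k)%nat -> Cts n (F i)) ->
  Cts n (fun x => fsum k (fun i => F i x)).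
Proof. induction k; simpl; intros H. apply Cts_const.
  apply Cts_plus. apply IHk; intros; apply H; lia. apply H; lia. Qed.

Lemma Cts_ext n f g : Cts n f -> (forall x, f x = g x) -> Cts n g.
Proof. intros H E x eps He. destruct (H x eps He) as [d [Hd H']]. exists d; split; auto.
  intros y Hy. rewrite <- !E. auto. Qed.

Lemma Cts_minus n f g : Cts n f -> Cts n g -> Cts n (fun x => f x - g x).
Proof. intros Hf Hg. apply (Cts_ext n (fun x => f x + (-1) * g x)).
  apply Cts_plus; auto. apply Cts_mult; auto. apply Cts_const. intros; ring. Qed.

Lemma pow2_cont : forall t, continuity_pt (fun x => x ^ 2) t.
Proof. intros t. apply derivable_continuous_pt. exists (INR 2 * t ^ Init.Nat.pred 2). apply derivable_pt_lim_pow. Qed.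

Lemma Flam_cts m n r g p q A xbar lam : 0 < p -> 0 < q -> Cts n (Flam m n r g p q A xbar lam).
Proof. intros Hp Hq. unfold Flam, norm2sq, pq_q, gnorm, matvec.
  apply Cts_plus.
  - apply (Cts_fsum n m (fun l x => (fsum n (fun k => A l k * x k) - fsum n (fun k => A l k * xbar k)) ^ 2)).
    intros l _. apply (Cts_comp n _ (fun t => t ^ 2)). apply pow2_cont.
    apply Cts_minus; [|apply Cts_const].
    apply (Cts_fsum n n (fun k x => A l k * x k)). intros k Hk. apply Cts_mult. apply Cts_const. apply Cts_coord; auto.
  - apply Cts_mult. apply Cts_const.
    apply (Cts_fsum n r (fun i x => rpow (rpow (fsum n (fun j => if Nat.eqb (g j) i then rpow (Rabs (x j)) p else 0)) (1 / p)) q)).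
    intros i _. apply (Cts_comp n _ (fun t => rpow t q)). apply rpow_cont; auto.
    apply (Cts_comp n _ (fun t => rpow t (1/p))). apply rpow_cont. apply Rdiv_lt_0_compat; lra.
    apply (Cts_fsum n n (fun j x => if Nat.eqb (g j) i then rpow (Rabs (x j)) p else 0)).
    intros j Hj. destruct (Nat.eqb (g j) i). 2: apply Cts_const.
    apply (Cts_comp n _ (fun t => rpow t p)). apply rpow_cont; auto.
    apply (Cts_comp n _ Rabs). apply Rcontinuity_abs. apply Cts_coord; auto.
Qed.

Lemma Flam_ext m n r g p q A xbar lam x y : (forall j, (j < n)%nat -> x j = y j) ->
  Flam m n r g p q A xbar lam x = Flam m n r g p q A xbar lam y.
Proof. intros H. unfold Flam, norm2sq, pq_q, gnorm, matvec.
  f_equal. apply fsum_ext. intros l _. f_equal. f_equal. apply fsum_ext. intros k Hk. rewrite H; auto.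
  f_equal. apply fsum_ext. intros i _. f_equal. f_equal. apply fsum_ext. intros j Hj. rewrite H; auto. Qed.

Definition Cv (n : nat) (xbar : nat -> R) (C : nat -> nat -> R) (v : nat -> R) : nat -> R :=
  fun i => fsum n (fun j => if supp xbar j then C i j * v j else 0).

Lemma sqrt_pow2_abs a : sqrt (a ^ 2) = Rabs a.
Proof. rewrite <- sqrt_Rsqr_abs. f_equal. unfold Rsqr. ring. Qed.

Lemma supp_sum_nonneg n xbar v : 0 <= fsum n (fun j => if supp xbar j then v j ^ 2 else 0).
Proof. apply fsum_nonneg. intros j _. destruct (supp xbar j). apply pow2_ge_0. lra. Qed.

Lemma supp_norm_scale n xbar a v : supp_norm n xbar (fun j => a * v j) = Rabs a * supp_norm n xbar v.
Proof. unfold supp_norm.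
  rewrite (fsum_ext n _ (fun j => a ^ 2 * (if supp xbar j then v j ^ 2 else 0))).
  rewrite fsum_scal. rewrite sqrt_mult_alt by apply pow2_ge_0. rewrite sqrt_pow2_abs. auto.
  intros j _. destruct (supp xbar j); ring. Qed.

Lemma abs_le_sq a b : Rabs a <= b -> a ^ 2 <= b ^ 2.
Proof. intros H. pose proof (Rabs_pos a). rewrite <- (pow2_abs a). apply pow_incr. lra. Qed.

Lemma supp_comp_le1 n xbar v j : supp_norm n xbar v <= 1 -> (j < n)%nat -> supp xbar j = true -> Rabs (v j) <= 1.
Proof. intros H Hj Hs. unfold supp_norm in H.
  pose proof (supp_sum_nonneg n xbar v).
  assert (fsum n (fun j => if supp xbar j then v j ^ 2 else 0) <= 1).
  { rewrite <- (sqrt_sqrt (fsum _ _)) by auto. pose proof (sqrt_pos (fsum n (fun j => if supp xbar j then v j ^ 2 else 0))). nra. }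
  assert (v j ^ 2 <= 1).
  { pose proof (fsum_single_le n (fun j => if supp xbar j then v j ^ 2 else 0) j). simpl in H2.
    rewrite Hs in H2. apply Rle_trans with (fsum n (fun j => if supp xbar j then v j ^ 2 else 0)); auto.
    apply H2; auto. intros; destruct (supp xbar j0); [apply pow2_ge_0| lra]. }
  rewrite <- (pow2_abs (v j)) in H2. pose proof (Rabs_pos (v j)). nra. Qed.

Lemma spec_norm_prop n xbar C : 0 <= spec_norm n xbar C /\
  forall v, supp_norm n xbar (Cv n xbar C v) <= spec_norm n xbar C * supp_norm n xbar v.
Proof.
  set (M := sqrt (fsum n (fun i => (fsum n (fun j => Rabs (C i j))) ^ 2))).
  assert (Hb: forall t, spec_set n xbar C t -> t <= M).
  { intros t [v [Hv Ht]]. subst t. unfold supp_norm at 1, M. apply sqrt_le_1_alt. apply fsum_le.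
    intros i Hi. destruct (supp xbar i).
    - apply abs_le_sq. eapply Rle_trans. apply fsum_abs. apply fsum_le. intros j Hj.
      destruct (supp xbar j) eqn:E. rewrite Rabs_mult. pose proof (Rabs_pos (C i j)).
      pose proof (supp_comp_le1 n xbar v j Hv Hj E). pose proof (Rabs_pos (v j)). nra.
      rewrite Rabs_R0. apply Rabs_pos.
    - apply pow2_ge_0. }
  assert (H0 : spec_set n xbar C 0).
  { exists (fun _ => 0). unfold supp_norm. rewrite !fsum_zero. rewrite sqrt_0. split; lra.
    intros i _. destruct (supp xbar i); auto. rewrite fsum_zero. ring. intros j _; destruct (supp xbar j); ring.
    intros i _. destruct (supp xbar i); auto. ring. }
  assert (Hlub : is_lub (spec_set n xbar C) (spec_norm n xbar C)).
  { unfold spec_norm. apply epsilon_spec.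
    destruct (completeness (spec_set n xbar C)) as [c Hc]. exists M. intros t Ht; auto. exists 0; auto.
    exists c; auto. }
  destruct Hlub as [Hub Hleast].
  split. apply Hub; auto.
  intros v. set (s := supp_norm n xbar v).
  assert (Hs: 0 <= s) by apply sqrt_pos.
  destruct (Req_dec s 0) as [E|E].
  - assert (Hv0: forall j, (j < n)%nat -> supp xbar j = true -> v j = 0).
    { intros j Hj Hsj. unfold s, supp_norm in E. apply sqrt_eq_0 in E; [| apply supp_sum_nonneg].
      assert (v j ^ 2 <= 0).
      { rewrite <- E. pose proof (fsum_single_le n (fun j => if supp xbar j then v j ^ 2 else 0) j). simpl in H.
        rewrite Hsj in H. apply H; auto. intros; destruct (supp xbar j0); [apply pow2_ge_0| lra]. }
      pose proof (pow2_ge_0 (v j)). nra. }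
    rewrite E. unfold supp_norm, Cv. rewrite fsum_zero. rewrite sqrt_0. lra.
    intros i Hi. destruct (supp xbar i); auto. rewrite fsum_zero. ring. intros j Hj.
    destruct (supp xbar j) eqn:Ej; auto. rewrite Hv0; auto. ring.
  - assert (Hsp: 0 < s) by lra.
    assert (Hw: spec_set n xbar C (/ s * supp_norm n xbar (Cv n xbar C v))).
    { exists (fun j => / s * v j). split.
      - rewrite supp_norm_scale. fold s. rewrite Rabs_pos_eq by (left; apply Rinv_0_lt_compat; auto).
        rewrite Rinv_l; lra.
      - rewrite <- (Rabs_pos_eq (/ s)) by (left; apply Rinv_0_lt_compat; auto). rewrite <- supp_norm_scale.
        f_equal. apply functional_extensionality. intros i. unfold Cv. rewrite <- fsum_scal.
        apply fsum_ext. intros j _. rewrite (Rabs_pos_eq (/ s)) by (left; apply Rinv_0_lt_compat; auto). destruct (supp xbar j); ring. }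
    apply Hub in Hw. apply Rmult_le_compat_l with (r := s) in Hw; auto.
    rewrite <- Rmult_assoc, Rinv_r in Hw by lra. lra. Qed.

Lemma AtA_d m n A xbar d k : (forall j, (j < n)%nat -> supp xbar j = false -> d j = 0) ->
  fsum m (fun l => A l k * matvec n A d l) =
  fsum n (fun j => if supp xbar j then gram m A k j * d j else 0).
Proof. intros Hd. unfold matvec, gram.
  rewrite (fsum_ext m _ (fun l => fsum n (fun j => A l k * (A l j * d j)))).
  2: intros; rewrite fsum_scal; auto.
  rewrite fsum_swap. apply fsum_ext. intros j Hj.
  destruct (supp xbar j) eqn:E.
  - rewrite <- fsum_scal_r. apply fsum_ext. intros; ring.
  - rewrite Hd by auto. apply fsum_zero. intros; ring. Qed.

Lemma inv_identity m n A xbar C d i : is_inverse_on_supp m n A xbar C ->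
  (forall j, (j < n)%nat -> supp xbar j = false -> d j = 0) -> (i < n)%nat -> supp xbar i = true ->
  d i = fsum n (fun k => if supp xbar k then C i k * fsum m (fun l => A l k * matvec n A d l) else 0).
Proof. intros Hinv Hd Hi Hsi.
  rewrite (fsum_ext n _ (fun k => fsum n (fun j => if supp xbar k then (if supp xbar j then C i k * gram m A k j * d j else 0) else 0))).
  2:{ intros k Hk. rewrite (AtA_d m n A xbar d k Hd). destruct (supp xbar k). rewrite <- fsum_scal. apply fsum_ext.
      intros j _. destruct (supp xbar j); ring. rewrite fsum_zero; auto. }
  rewrite fsum_swap.
  rewrite (fsum_ext n _ (fun j => if Nat.eqb i j then d j else 0)).
  rewrite fsum_delta'; auto.
  intros j Hj. destruct (supp xbar j) eqn:Ej.
  - destruct (Hinv i j Hi Hj Hsi Ej) as [H1 _].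
    rewrite (fsum_ext n _ (fun k => (if supp xbar k then C i k * gram m A k j else 0) * d j)).
    rewrite fsum_scal_r, H1. destruct (Nat.eqb i j); ring.
    intros k _. destruct (supp xbar k); ring.
  - rewrite fsum_zero. destruct (Nat.eqb_spec i j). subst; congruence. auto.
    intros k _. destruct (supp xbar k); auto. Qed.

Lemma deriv_loc_ext f g x l : derivable_pt_lim f x l ->
  (exists eta, 0 < eta /\ forall t, Rabs (t - x) < eta -> g t = f t) -> derivable_pt_lim g x l.
Proof. intros H [eta [He E]] eps Heps. destruct (H eps Heps) as [d Hd].
  assert (Hm: 0 < Rmin d eta) by (apply Rmin_pos; [apply cond_pos| auto]).
  exists (mkposreal _ Hm). intros h Hh0 Hh. simpl in Hh.
  rewrite !E. apply Hd; auto. eapply Rlt_le_trans; [apply Hh| apply Rmin_l].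
  rewrite Rminus_diag, Rabs_R0; auto.
  replace (x + h - x) with h by ring. eapply Rlt_le_trans; [apply Hh| apply Rmin_r]. Qed.

Lemma deriv_min_zero f l eta : 0 < eta -> (forall t, Rabs t < eta -> f 0 <= f t) ->
  derivable_pt_lim f 0 l -> l = 0.
Proof. intros He Hmin H. destruct (Req_dec l 0); auto. exfalso.
  assert (Hl: 0 < Rabs l / 2) by (pose proof (Rabs_pos_lt l H0); lra).
  destruct (H _ Hl) as [d Hd].
  pose proof (cond_pos d) as Hdp.
  set (u := Rmin d eta / 2).
  assert (Hu: 0 < u) by (unfold u; pose proof (Rmin_pos d eta Hdp He); lra).
  assert (Hud: u < d) by (unfold u; pose proof (Rmin_l d eta); lra).
  assert (Hue: u < eta) by (unfold u; pose proof (Rmin_r d eta); lra).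
  destruct (Rlt_dec 0 l) as [Hlp|Hln].
  - assert (A := Hd (- u)). rewrite Rplus_0_l in A.
    assert (B: f 0 <= f (-u)) by (apply Hmin; rewrite Rabs_Ropp, Rabs_pos_eq; lra).
    rewrite Rabs_pos_eq in Hl by lra.
    assert (C: Rabs ((f (- u) - f 0) / - u - l) < Rabs l / 2) by (apply A; [lra| rewrite Rabs_Ropp, Rabs_pos_eq; lra]).
    rewrite (Rabs_pos_eq l) in C by lra.
    assert ((f (- u) - f 0) / - u <= 0).
    { unfold Rdiv. rewrite Rinv_opp.
      assert (0 < / u) by (apply Rinv_0_lt_compat; lra). nra. }
    apply Rabs_def2 in C. lra.
  - assert (Hl': l < 0) by lra.
    assert (A := Hd u). rewrite Rplus_0_l in A.
    assert (B: f 0 <= f u) by (apply Hmin; rewrite Rabs_pos_eq; lra).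
    assert (C: Rabs ((f u - f 0) / u - l) < Rabs l / 2) by (apply A; [lra| rewrite Rabs_pos_eq; lra]).
    rewrite (Rabs_left l) in C by lra.
    assert (0 <= (f u - f 0) / u).
    { unfold Rdiv. assert (0 < / u) by (apply Rinv_0_lt_compat; lra). nra. }
    apply Rabs_def2 in C. lra. Qed.

Definition sgn (x : R) : R := if Rlt_dec 0 x then 1 else -1.

Lemma abs_shift_deriv zk : zk <> 0 -> derivable_pt_lim (fun t => Rabs (zk + t)) 0 (sgn zk).
Proof. intros Hz.
  assert (E: derivable_pt_lim (fun t => Rabs (zk + t)) 0 (sgn zk * 1)).
  { apply (derivable_pt_lim_comp (fun t => zk + t) Rabs).
    - replace 1 with (0 + 1) by ring. apply derivable_pt_lim_plus. apply derivable_pt_lim_const. apply derivable_pt_lim_id.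
    - rewrite Rplus_0_r. unfold sgn. destruct (Rlt_dec 0 zk). apply Rabs_derive_1; auto. apply Rabs_derive_2; lra. }
  rewrite Rmult_1_r in E. auto. Qed.

Lemma psi_deriv zk W p e : zk <> 0 -> 0 <= W ->
  derivable_pt_lim (fun t => Rpower (W + Rpower (Rabs (zk + t)) p) e) 0
    (e * Rpower (W + Rpower (Rabs zk) p) (e - 1) * (p * Rpower (Rabs zk) (p - 1) * sgn zk)).
Proof. intros Hz HW.
  assert (Hpos: 0 < Rabs zk) by (apply Rabs_pos_lt; auto).
  assert (D1: derivable_pt_lim (fun t => Rpower (Rabs (zk + t)) p) 0 (p * Rpower (Rabs zk) (p - 1) * sgn zk)).
  { apply (derivable_pt_lim_comp (fun t => Rabs (zk + t)) (fun s => Rpower s p)).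
    apply abs_shift_deriv; auto. rewrite Rplus_0_r. apply derivable_pt_lim_power; auto. }
  assert (D2: derivable_pt_lim (fun t => W + Rpower (Rabs (zk + t)) p) 0 (p * Rpower (Rabs zk) (p - 1) * sgn zk)).
  { replace (p * Rpower (Rabs zk) (p - 1) * sgn zk) with (0 + p * Rpower (Rabs zk) (p - 1) * sgn zk) by ring.
    apply (derivable_pt_lim_plus (fun _ => W)). apply derivable_pt_lim_const. auto. }
  replace (e * Rpower (W + Rpower (Rabs zk) p) (e - 1) * (p * Rpower (Rabs zk) (p - 1) * sgn zk))
    with ((e * Rpower (W + Rpower (Rabs zk) p) (e - 1)) * (p * Rpower (Rabs zk) (p - 1) * sgn zk)) by ring.
  apply (derivable_pt_lim_comp (fun t => W + Rpower (Rabs (zk + t)) p) (fun s => Rpower s e)).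
  auto. rewrite Rplus_0_r. apply derivable_pt_lim_power. pose proof (Rpower_pos (Rabs zk) p). lra. Qed.

Lemma quad_deriv a b : derivable_pt_lim (fun t => 2 * t * a + t ^ 2 * b) 0 (2 * a).
Proof.
  assert (D: derivable_pt_lim (fun t => 2 * t * a + t ^ 2 * b) 0 (2 * a * 1 + (INR 2 * 0 ^ Init.Nat.pred 2) * b)).
  { apply (derivable_pt_lim_plus (fun t => 2 * t * a) (fun t => t^2 * b)).
    - apply (derivable_pt_lim_ext (fun t => (2*a) * t)). intros; ring.
      apply derivable_pt_lim_scal. apply derivable_pt_lim_id.
    - apply (derivable_pt_lim_ext (fun t => b * t ^ 2)). intros; ring.
      replace (INR 2 * 0 ^ Init.Nat.pred 2 * b) with (b * (INR 2 * 0 ^ Init.Nat.pred 2)) by ring.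
      apply derivable_pt_lim_scal. apply derivable_pt_lim_pow. }
  replace (2 * a) with (2 * a * 1 + INR 2 * 0 ^ Init.Nat.pred 2 * b) by (simpl; ring). auto. Qed.

Definition gS n (g : nat -> nat) p (x : nat -> R) i :=
  fsum n (fun j => if Nat.eqb (g j) i then rpow (Rabs (x j)) p else 0).

Lemma gnorm_gS n g p x i : gnorm n g p x i = rpow (gS n g p x i) (1 / p).
Proof. reflexivity. Qed.

Lemma supp_true xbar j : supp xbar j = true <-> xbar j <> 0.
Proof. unfold supp. destruct (Req_EM_T (xbar j) 0); split; intros; try congruence; tauto. Qed.

Lemma supp_false xbar j : supp xbar j = false <-> xbar j = 0.
Proof. unfold supp. destruct (Req_EM_T (xbar j) 0); split; intros; try congruence; tauto. Qed.

Lemma gS_nonneg n g p x i : 0 <= gS n g p x i.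
Proof. apply fsum_nonneg. intros j _. destruct (Nat.eqb (g j) i). apply rpow_nonneg. lra. Qed.

Lemma gS_term_le n g p x j : (j < n)%nat -> rpow (Rabs (x j)) p <= gS n g p x (g j).
Proof. intros Hj. unfold gS.
  pose proof (fsum_single_le n (fun j0 => if Nat.eqb (g j0) (g j) then rpow (Rabs (x j0)) p else 0) j) as H.
  simpl in H. rewrite Nat.eqb_refl in H. apply H; auto.
  intros; destruct (Nat.eqb (g j0) (g j)); [apply rpow_nonneg| lra]. Qed.

Lemma gnorm_ge_comp n g p x j : 0 < p -> (j < n)%nat -> Rabs (x j) <= gnorm n g p x (g j).
Proof. intros Hp Hj. rewrite gnorm_gS.
  rewrite <- (rpow_inv (Rabs (x j)) p) at 1 by (auto; apply Rabs_pos).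
  apply rpow_mono. apply Rdiv_lt_0_compat; lra. apply gS_term_le; auto. Qed.

Lemma pq_nonneg n r g p q x : 0 <= pq_q n r g p q x.
Proof. apply fsum_nonneg. intros; apply rpow_nonneg. Qed.

Lemma pq_term_ge n r g p q x j : 0 < p -> 0 < q -> (j < n)%nat -> (g j < r)%nat ->
  rpow (Rabs (x j)) q <= pq_q n r g p q x.
Proof. intros Hp Hq Hj Hg. unfold pq_q. eapply Rle_trans.
  2: apply (fsum_single_le r (fun i => rpow (gnorm n g p x i) q) (g j)); auto; intros; apply rpow_nonneg.
  simpl. apply rpow_mono; auto. apply gnorm_ge_comp; auto. Qed.

Lemma gnorm_zero n g p x i : 0 < p -> (forall j, (j < n)%nat -> g j = i -> x j = 0) -> gnorm n g p x i = 0.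
Proof. intros Hp H. rewrite gnorm_gS. unfold gS. rewrite fsum_zero. apply rpow_le0; lra.
  intros j Hj. destruct (Nat.eqb_spec (g j) i). rewrite H, Rabs_R0; auto. apply rpow_le0; lra. auto. Qed.

Lemma gnorm_ext n g p x y i : (forall j, (j < n)%nat -> g j = i -> x j = y j) -> gnorm n g p x i = gnorm n g p y i.
Proof. intros H. rewrite !gnorm_gS. unfold gS. f_equal. apply fsum_ext. intros j Hj.
  destruct (Nat.eqb_spec (g j) i); auto. rewrite H; auto. Qed.

Definition partT (xbar y : nat -> R) : nat -> R := fun j => if supp xbar j then y j else 0.
Definition partN (xbar y : nat -> R) : nat -> R := fun j => if supp xbar j then 0 else y j.

Lemma pq_split n r g p q xbar y : 0 < p -> 0 < q ->
  (forall i, (i < r)%nat -> group_nonzero n g xbar i -> group_active n g xbar i) ->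
  pq_q n r g p q y = pq_q n r g p q (partT xbar y) + pq_q n r g p q (partN xbar y).
Proof. intros Hp Hq Hact. unfold pq_q. rewrite <- fsum_plus. apply fsum_ext. intros i Hi.
  destruct (classic (group_nonzero n g xbar i)) as [Hnz|Hz].
  - assert (Ha := Hact i Hi Hnz).
    rewrite (gnorm_zero n g p (partN xbar y)).
    rewrite (rpow_le0 0) by lra. rewrite Rplus_0_r. f_equal. apply gnorm_ext.
    intros j Hj Hg. unfold partT. assert (supp xbar j = true) by (apply supp_true; apply Ha; auto). rewrite H; auto.
    auto. intros j Hj Hg. unfold partN. assert (supp xbar j = true) by (apply supp_true; apply Ha; auto). rewrite H; auto.
  - assert (Hx0: forall j, (j < n)%nat -> g j = i -> supp xbar j = false).
    { intros j Hj Hg. apply supp_false. destruct (Req_dec (xbar j) 0); auto. exfalso; apply Hz. exists j; auto. }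
    rewrite (gnorm_zero n g p (partT xbar y)).
    rewrite (rpow_le0 0) by lra. rewrite Rplus_0_l. f_equal. apply gnorm_ext.
    intros j Hj Hg. unfold partN. rewrite Hx0; auto.
    auto. intros j Hj Hg. unfold partT. rewrite Hx0; auto. Qed.

Lemma norm2sq_ext m a b : (forall l, (l < m)%nat -> a l = b l) -> norm2sq m a = norm2sq m b.
Proof. intros H. unfold norm2sq. apply fsum_ext. intros; rewrite H; auto. Qed.

Definition pert (z : nat -> R) (k : nat) (t : R) : nat -> R := fun j => z j + (if Nat.eqb j k then t else 0).

Lemma matvec_pert n A z k t l : (k < n)%nat -> matvec n A (pert z k t) l = matvec n A z l + t * A l k.
Proof. intros Hk. unfold matvec, pert.
  rewrite (fsum_ext n _ (fun j => A l j * z j + (if Nat.eqb j k then (fun j => t * A l j) j else 0))).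
  rewrite fsum_plus, fsum_delta; auto.
  intros j _. destruct (Nat.eqb j k); ring. Qed.

Lemma norm2sq_pert m a b t : norm2sq m (fun l => a l + t * b l) =
  norm2sq m a + 2 * t * fsum m (fun l => a l * b l) + t ^ 2 * norm2sq m b.
Proof. unfold norm2sq. rewrite <- fsum_scal, <- fsum_scal, <- !fsum_plus. apply fsum_ext. intros; ring. Qed.

Lemma gS_pert n g p z k t : (k < n)%nat ->
  gS n g p (pert z k t) (g k) = gS n g p z (g k) - rpow (Rabs (z k)) p + rpow (Rabs (z k + t)) p.
Proof. intros Hk. unfold gS.
  rewrite (fsum_change1 n k (fun j => if Nat.eqb (g j) (g k) then rpow (Rabs (z j)) p else 0)); auto.
  simpl. rewrite Nat.eqb_refl. unfold pert. rewrite Nat.eqb_refl. auto.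
  intros j Hj Hjk. unfold pert. destruct (Nat.eqb_spec j k); [lia|]. rewrite Rplus_0_r; auto. Qed.

Lemma pq_pert n r g p q z k t : (k < n)%nat -> (g k < r)%nat ->
  pq_q n r g p q (pert z k t) = pq_q n r g p q z - rpow (gnorm n g p z (g k)) q
     + rpow (gnorm n g p (pert z k t) (g k)) q.
Proof. intros Hk Hg. unfold pq_q.
  apply (fsum_change1 r (g k) (fun i => rpow (gnorm n g p z i) q) (fun i => rpow (gnorm n g p (pert z k t) i) q)); auto.
  intros i Hi Hik. f_equal. apply gnorm_ext. intros j Hj Hgj. unfold pert.
  destruct (Nat.eqb_spec j k). subst. congruence. ring. Qed.

Lemma Flam_pert m n r g p q A xbar lam z k t : (k < n)%nat -> (g k < r)%nat ->
  Flam m n r g p q A xbar lam (pert z k t) - Flam m n r g p q A xbar lam z =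
  2 * t * fsum m (fun l => (matvec n A z l - matvec n A xbar l) * A l k) + t ^ 2 * norm2sq m (fun l => A l k)
  + lam * (rpow (gnorm n g p (pert z k t) (g k)) q - rpow (gnorm n g p z (g k)) q).
Proof. intros Hk Hg. unfold Flam. rewrite pq_pert by auto.
  rewrite (norm2sq_ext m _ (fun l => (matvec n A z l - matvec n A xbar l) + t * A l k)).
  rewrite norm2sq_pert. ring.
  intros l _. rewrite matvec_pert by auto. ring. Qed.

Definition hk n g p q (z : nat -> R) k :=
  q * Rpower (gS n g p z (g k)) (q / p - 1) * Rpower (Rabs (z k)) (p - 1) * sgn (z k).

Lemma first_order m n r g p q A xbar lam z k eta : 0 < p -> 0 < q -> (k < n)%nat -> (g k < r)%nat ->
  0 < eta -> (forall t, Rabs t < eta -> z k + t <> 0) ->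
  (forall t, Rabs t < eta -> Flam m n r g p q A xbar lam z <= Flam m n r g p q A xbar lam (pert z k t)) ->
  2 * fsum m (fun l => (matvec n A z l - matvec n A xbar l) * A l k) + lam * hk n g p q z k = 0.
Proof. intros Hp Hq Hk Hg He Hnz Hmin.
  set (a := fsum m (fun l => (matvec n A z l - matvec n A xbar l) * A l k)).
  set (b := norm2sq m (fun l => A l k)).
  set (W := gS n g p z (g k) - rpow (Rabs (z k)) p).
  set (e := 1 / p * q).
  assert (HW: 0 <= W) by (unfold W; pose proof (gS_term_le n g p z k Hk); lra).
  assert (Hzk: z k <> 0) by (replace (z k) with (z k + 0) by ring; apply Hnz; rewrite Rabs_R0; auto).
  set (F := fun t => 2 * t * a + t ^ 2 * b + lam * Rpower (W + Rpower (Rabs (z k + t)) p) e).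
  set (c := rpow (gnorm n g p z (g k)) q).
  assert (HF: forall t, Rabs t < eta -> F t = Flam m n r g p q A xbar lam (pert z k t) - Flam m n r g p q A xbar lam z + lam * c).
  { intros t Ht. rewrite Flam_pert by auto. unfold F, c. fold a b.
    rewrite gnorm_gS, rpow_rpow, gS_pert by (auto; apply Rdiv_lt_0_compat; lra). fold e.
    assert (Hpos: 0 < Rabs (z k + t)) by (apply Rabs_pos_lt; auto).
    rewrite (rpow_pos (Rabs (z k + t))) by auto.
    rewrite (rpow_pos (gS n g p z (g k) - rpow (Rabs (z k)) p + Rpower (Rabs (z k + t)) p)).
    fold W. ring. fold W. pose proof (Rpower_pos (Rabs (z k + t)) p). lra. }
  assert (Hmin': forall t, Rabs t < eta -> F 0 <= F t).
  { intros t Ht. rewrite !HF by (auto; rewrite Rabs_R0; auto).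
    assert (Flam m n r g p q A xbar lam (pert z k 0) = Flam m n r g p q A xbar lam z).
    { apply Flam_ext. intros j _. unfold pert. destruct (Nat.eqb j k); ring. }
    rewrite H. pose proof (Hmin t Ht). lra. }
  assert (HD: derivable_pt_lim F 0 (2 * a + lam * (e * Rpower (W + Rpower (Rabs (z k)) p) (e - 1) * (p * Rpower (Rabs (z k)) (p - 1) * sgn (z k))))).
  { apply (derivable_pt_lim_plus (fun t => 2 * t * a + t ^ 2 * b) (fun t => lam * Rpower (W + Rpower (Rabs (z k + t)) p) e)).
    apply quad_deriv. apply derivable_pt_lim_scal. apply psi_deriv; auto. }
  apply (deriv_min_zero F _ eta He Hmin') in HD.
  rewrite <- HD. f_equal. f_equal. unfold hk.
  assert (Hpos: 0 < Rabs (z k)) by (apply Rabs_pos_lt; auto).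
  assert (E1: W + Rpower (Rabs (z k)) p = gS n g p z (g k)) by (unfold W; rewrite rpow_pos; auto; ring).
  rewrite E1. unfold e. replace (1 / p * q - 1) with (q / p - 1) by (field; lra).
  field. lra. Qed.

Lemma Rpower_inv_base c p : 0 < c -> Rpower (/ c) p = Rpower c (- p).
Proof. intros Hc. unfold Rpower. rewrite ln_Rinv by auto. f_equal; ring. Qed.

Lemma Rpower_exp_mono c x y : 1 <= c -> x <= y -> Rpower c x <= Rpower c y.
Proof. intros Hc Hxy. unfold Rpower.
  assert (0 <= ln c). { destruct (Req_dec c 1). subst; rewrite ln_1; lra. left; rewrite <- ln_1; apply ln_increasing; lra. }
  destruct (Req_dec (x * ln c) (y * ln c)) as [E|E]. rewrite E; lra.
  left; apply exp_increasing. assert (x * ln c <= y * ln c) by (apply Rmult_le_compat_r; auto). lra. Qed.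

Lemma Rpower_sq x a : Rpower x a ^ 2 = Rpower x (2 * a).
Proof. simpl. rewrite Rmult_1_r. rewrite <- Rpower_plus. f_equal; ring. Qed.

Lemma ratio_of_box c x z rho : 1 < c -> x <> 0 -> 0 <= rho -> rho <= (1 - / c) * Rabs x -> Rabs (z - x) <= rho ->
  Rabs x / c <= Rabs z <= c * Rabs x.
Proof. intros Hc Hx Hr Hrx Hzx.
  assert (Hax: 0 < Rabs x) by (apply Rabs_pos_lt; auto).
  assert (Hic: 0 < / c < 1). { split. apply Rinv_0_lt_compat; lra. rewrite <- Rinv_1. apply Rinv_lt_contravar; lra. }
  assert (Hcc: c + / c >= 2).
  { assert (c * (c + /c) = c*c + 1) by (field; lra). assert (0 <= (c - 1)^2) by apply pow2_ge_0. nra. }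
  pose proof (Rabs_triang_inv z x). pose proof (Rabs_triang_inv x z).
  rewrite Rabs_minus_sym in H0.
  unfold Rdiv. split; nra. Qed.

Lemma hk_bound n g p q xbar z k c : 1 <= p -> 0 < q -> q < 1 -> 1 < c -> Rpower c (2 * p) = 2 -> (k < n)%nat ->
  (forall j, (j < n)%nat -> g j = g k -> xbar j <> 0 /\ Rabs (xbar j) / c <= Rabs (z j) <= c * Rabs (xbar j)) ->
  hk n g p q z k ^ 2 <= 4 * q ^ 2 * (rpow (gnorm n g p xbar (g k)) (2 * (q - p)) * rpow (Rabs (xbar k)) (2 * p - 2)).
Proof. intros Hp Hq0 Hq1 Hc Hc2 Hk Hgrp.
  assert (Hcp: 0 < c) by lra.
  destruct (Hgrp k Hk eq_refl) as [Hxk [Hzk1 Hzk2]].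
  assert (Haxk: 0 < Rabs (xbar k)) by (apply Rabs_pos_lt; auto).
  assert (Hazk: 0 < Rabs (z k)). { assert (0 < Rabs (xbar k) / c) by (apply Rdiv_lt_0_compat; lra). lra. }
  set (S := gS n g p z (g k)). set (Sb := gS n g p xbar (g k)).
  assert (HSb: 0 < Sb). { unfold Sb. pose proof (gS_term_le n g p xbar k Hk). pose proof (rpow_pos_pos (Rabs (xbar k)) p Haxk). lra. }
  assert (HS: Rpower c (- p) * Sb <= S).
  { unfold S, Sb, gS. rewrite <- fsum_scal. apply fsum_le. intros j Hj.
    destruct (Nat.eqb_spec (g j) (g k)); [|lra].
    destruct (Hgrp j Hj e) as [Hxj [Hz1 Hz2]].
    assert (Haxj: 0 < Rabs (xbar j)) by (apply Rabs_pos_lt; auto).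
    assert (0 < Rabs (xbar j) / c) by (apply Rdiv_lt_0_compat; lra).
    rewrite !rpow_pos by lra. rewrite <- Rpower_inv_base by auto. rewrite Rpower_mult_distr.
    apply Rle_Rpower_l. lra. split. apply Rmult_lt_0_compat; auto. apply Rinv_0_lt_compat; auto.
    unfold Rdiv in Hz1. lra. apply Rinv_0_lt_compat; auto. auto. }
  assert (HSpos: 0 < S). { assert (0 < Rpower c (- p) * Sb) by (apply Rmult_lt_0_compat; auto; apply Rpower_pos). lra. }
  set (a := q / p - 1).
  assert (Ha: a <= 0). { unfold a. assert (q / p <= 1). { apply Rmult_le_reg_r with p. lra. unfold Rdiv. rewrite Rmult_assoc, Rinv_l by lra. lra. } lra. }
  assert (B1: Rpower S a <= Rpower c (- p * a) * Rpower Sb a).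
  { eapply Rle_trans. apply Rpower_le_neg. auto. split. 2: apply HS. apply Rmult_lt_0_compat; auto. apply Rpower_pos.
    rewrite <- Rpower_mult_distr by (auto; apply Rpower_pos). rewrite Rpower_mult. lra. }
  assert (B2: Rpower (Rabs (z k)) (p - 1) <= Rpower c (p - 1) * Rpower (Rabs (xbar k)) (p - 1)).
  { rewrite Rpower_mult_distr by auto. apply Rle_Rpower_l. lra. split; auto. }
  assert (B3: Rpower c (- p * a + (p - 1)) <= 2).
  { rewrite <- Hc2. apply Rpower_exp_mono. lra. unfold a. replace (- p * (q / p - 1)) with (p - q) by (field; lra). lra. }
  set (X := Rpower Sb a * Rpower (Rabs (xbar k)) (p - 1)).
  assert (HX: 0 <= X) by (unfold X; pose proof (Rpower_pos Sb a); pose proof (Rpower_pos (Rabs (xbar k)) (p-1)); nra).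
  assert (Habs: Rabs (hk n g p q z k) <= 2 * q * X).
  { unfold hk. fold S. fold a. rewrite !Rabs_mult.
    assert (Rabs (sgn (z k)) = 1) by (unfold sgn; destruct (Rlt_dec 0 (z k)); [apply Rabs_R1| rewrite Rabs_left by lra; lra]).
    rewrite H. rewrite Rmult_1_r. rewrite (Rabs_pos_eq q) by lra.
    rewrite (Rabs_pos_eq (Rpower S a)) by (left; apply Rpower_pos).
    rewrite (Rabs_pos_eq (Rpower (Rabs (z k)) (p-1))) by (left; apply Rpower_pos).
    assert (Rpower S a * Rpower (Rabs (z k)) (p - 1) <= (Rpower c (- p * a) * Rpower Sb a) * (Rpower c (p - 1) * Rpower (Rabs (xbar k)) (p - 1))).
    { apply Rmult_le_compat; auto; left; apply Rpower_pos. }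
    assert ((Rpower c (- p * a) * Rpower Sb a) * (Rpower c (p - 1) * Rpower (Rabs (xbar k)) (p - 1)) = Rpower c (- p * a + (p - 1)) * X).
    { unfold X. rewrite Rpower_plus. ring. }
    assert (Rpower c (- p * a + (p - 1)) * X <= 2 * X) by (apply Rmult_le_compat_r; auto).
    rewrite Rmult_assoc. replace (2 * q * X) with (q * (2 * X)) by ring. apply Rmult_le_compat_l; lra. }
  assert (hk n g p q z k ^ 2 <= (2 * q * X) ^ 2).
  { apply abs_le_sq; auto. }
  eapply Rle_trans. apply H.
  assert (E: X ^ 2 = rpow (gnorm n g p xbar (g k)) (2 * (q - p)) * rpow (Rabs (xbar k)) (2 * p - 2)).
  { unfold X. rewrite Rpow_mult_distr, !Rpower_sq. rewrite gnorm_gS, rpow_rpow by (apply Rdiv_lt_0_compat; lra).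
    fold Sb. rewrite !rpow_pos by auto. unfold a. f_equal; f_equal; field; lra. }
  rewrite <- E. right. ring. Qed.

Lemma exists_rho n (P : nat -> Prop) (a : nat -> R) : (forall j, (j < n)%nat -> P j -> 0 < a j) ->
  exists rho, 0 < rho /\ rho <= 1 /\ forall j, (j < n)%nat -> P j -> rho <= a j.
Proof. induction n; intros H.
  - exists 1. repeat split; try lra. intros; lia.
  - destruct IHn as [rho [H1 [H2 H3]]]. intros; apply H; auto; lia.
    destruct (classic (P n)) as [Pn|Pn].
    + assert (0 < a n) by (apply H; auto; lia).
      exists (Rmin rho (a n)). repeat split. apply Rmin_pos; auto. eapply Rle_trans; [apply Rmin_l| auto].
      intros j Hj Pj. destruct (Nat.eq_dec j n). subst; apply Rmin_r.
      eapply Rle_trans; [apply Rmin_l| apply H3; auto; lia].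
    + exists rho. repeat split; auto. intros j Hj Pj. destruct (Nat.eq_dec j n). subst; tauto. apply H3; auto; lia. Qed.

Lemma small_pow q lam K t : 0 < q -> q < 1 -> 0 < lam -> 0 <= K -> 0 <= t ->
  t < Rpower (lam / (K + 1)) (1 / (1 - q)) -> K * t <= lam * rpow t q.
Proof. intros Hq0 Hq1 Hl HK Ht Htd. destruct (Req_dec t 0). subst. rewrite rpow_le0 by lra. lra.
  assert (Htp: 0 < t) by lra. rewrite rpow_pos by auto.
  replace q with (1 + (q - 1)) at 1 by ring. rewrite Rpower_plus, Rpower_1 by auto.
  assert (Rpower (Rpower (lam / (K + 1)) (1 / (1 - q))) (q - 1) <= Rpower t (q - 1)).
  { apply Rpower_le_neg. lra. split; auto. lra. }
  rewrite Rpower_mult in H0. replace (1 / (1 - q) * (q - 1)) with (- (1)) in H0 by (field; lra).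
  rewrite Rpower_Ropp, Rpower_1 in H0 by (apply Rdiv_lt_0_compat; lra).
  replace (/ (lam / (K + 1))) with ((K + 1) / lam) in H0 by (field; lra).
  assert (lam * ((K + 1) / lam) = K + 1) by (field; lra).
  assert (lam * Rpower t (q - 1) >= K + 1).
  { rewrite <- H1. apply Rle_ge. apply Rmult_le_compat_l; lra. }
  nra. Qed.

Lemma comp_lt_of_norm2sq n v d j : 0 < d -> norm2sq n v < d ^ 2 -> (j < n)%nat -> Rabs (v j) < d.
Proof. intros Hd H Hj. unfold norm2sq in H.
  assert (v j ^ 2 <= fsum n (fun j => v j ^ 2)).
  { apply (fsum_single_le n (fun j => v j ^ 2) j); auto. intros; apply pow2_ge_0. }
  rewrite <- (pow2_abs (v j)) in H0. pose proof (Rabs_pos (v j)).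
  destruct (Rlt_dec (Rabs (v j)) d); auto. nra. Qed.

Definition boxlo (xbar : nat -> R) rho j := if supp xbar j then xbar j - rho else 0.
Definition boxhi (xbar : nat -> R) rho j := if supp xbar j then xbar j + rho else 0.

Lemma local_min_step m n r g p q A xbar lam z rho : 0 < p -> 0 < q -> q < 1 -> 0 < lam -> 0 < rho -> rho <= 1 ->
  is_partition n r g ->
  (forall i, (i < r)%nat -> group_nonzero n g xbar i -> group_active n g xbar i) ->
  (forall y, (forall j, (j < n)%nat -> boxlo xbar rho j <= y j <= boxhi xbar rho j) -> (forall j, (n <= j)%nat -> y j = 0) ->
     Flam m n r g p q A xbar lam z <= Flam m n r g p q A xbar lam y) ->
  (forall j, (j < n)%nat -> supp xbar j = true -> Rabs (z j - xbar j) < rho / 2) ->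
  (forall j, (j < n)%nat -> supp xbar j = false -> z j = 0) ->
  local_minimizer n (Flam m n r g p q A xbar lam) z.
Proof. intros Hp Hq0 Hq1 Hl Hr0 Hr1 [Hpart _] Hact Hmin Hin Hz0.
  set (alpha := fun l => fsum n (fun j => Rabs (A l j))).
  set (Kb := fsum n (fun j => fsum m (fun l => alpha l * Rabs (A l j)))).
  assert (HKb: 0 <= Kb). { apply fsum_nonneg; intros; apply fsum_nonneg; intros. unfold alpha.
    apply Rmult_le_pos; [apply fsum_nonneg; intros|]; apply Rabs_pos. }
  set (K := 2 * Kb * (INR n + 1)).
  assert (HK: 0 <= K). { unfold K. pose proof (pos_INR n). nra. }
  set (d2 := Rpower (lam / (K + 1)) (1 / (1 - q))).
  assert (Hd2: 0 < d2) by apply Rpower_pos.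
  set (d := Rmin (rho / 2) d2).
  assert (Hd: 0 < d) by (apply Rmin_pos; lra).
  exists d. split; auto. intros y Hy.
  assert (Hyc: forall j, (j < n)%nat -> Rabs (y j - z j) < d) by (intros; apply (comp_lt_of_norm2sq n (fun j => y j - z j)); auto).
  set (yT := partT xbar y). set (yN := partN xbar y).
  set (yT' := fun j => if Nat.ltb j n then yT j else 0).
  assert (HT: Flam m n r g p q A xbar lam z <= Flam m n r g p q A xbar lam yT).
  { rewrite (Flam_ext m n r g p q A xbar lam yT yT'). apply Hmin.
    - intros j Hj. unfold yT', yT, partT, boxlo, boxhi. destruct (Nat.ltb_spec j n); [|lia].
      destruct (supp xbar j) eqn:E; [|lra].
      assert (A1 := Hin j Hj E). assert (A2 := Hyc j Hj). assert (d <= rho / 2) by apply Rmin_l.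
      apply Rabs_def2 in A1. apply Rabs_def2 in A2. lra.
    - intros j Hj. unfold yT'. destruct (Nat.ltb_spec j n); [lia|auto].
    - intros j Hj. unfold yT'. destruct (Nat.ltb_spec j n); [auto|lia]. }
  assert (Hsplit := pq_split n r g p q xbar y Hp Hq0 Hact). fold yT yN in Hsplit.
  assert (HmT: forall l, matvec n A y l = matvec n A yT l + matvec n A yN l).
  { intros l. unfold matvec. rewrite <- fsum_plus. apply fsum_ext. intros j _. unfold yT, yN, partT, partN.
    destruct (supp xbar j); ring. }
  set (a := fun l => matvec n A yT l - matvec n A xbar l).
  set (b := fun l => matvec n A yN l).
  assert (HQ: norm2sq m (fun l => matvec n A y l - matvec n A xbar l) >= norm2sq m a + 2 * fsum m (fun l => a l * b l)).
  { unfold norm2sq. rewrite <- fsum_scal, <- fsum_plus. apply Rle_ge. apply fsum_le. intros l _.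
    rewrite HmT. unfold a, b. pose proof (pow2_ge_0 (matvec n A yN l)). nra. }
  assert (Ha: forall l, Rabs (a l) <= alpha l).
  { intros l. unfold a, matvec, alpha. rewrite <- fsum_minus. eapply Rle_trans. apply fsum_abs. apply fsum_le.
    intros j Hj. rewrite <- Rmult_minus_distr_l, Rabs_mult.
    assert (Rabs (yT j - xbar j) <= 1).
    { unfold yT, partT. destruct (supp xbar j) eqn:E.
      - assert (A1 := Hin j Hj E). assert (A2 := Hyc j Hj). assert (d <= rho / 2) by apply Rmin_l.
        replace (y j - xbar j) with ((y j - z j) + (z j - xbar j)) by ring.
        eapply Rle_trans. apply Rabs_triang. lra.
      - apply supp_false in E. rewrite E. rewrite Rminus_diag, Rabs_R0. lra. }
    pose proof (Rabs_pos (A l j)). nra. }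
  assert (Hb: forall l, Rabs (b l) <= fsum n (fun j => Rabs (A l j) * Rabs (yN j))).
  { intros l. unfold b, matvec. eapply Rle_trans. apply fsum_abs. right. apply fsum_ext. intros; apply Rabs_mult. }
  assert (Hab: Rabs (fsum m (fun l => a l * b l)) <= Kb * fsum n (fun j => Rabs (yN j))).
  { eapply Rle_trans. apply fsum_abs.
    apply Rle_trans with (fsum m (fun l => alpha l * fsum n (fun j => Rabs (A l j) * Rabs (yN j)))).
    { apply fsum_le. intros l _. rewrite Rabs_mult. apply Rmult_le_compat; try apply Rabs_pos; auto. }
    rewrite (fsum_ext m _ (fun l => fsum n (fun j => alpha l * Rabs (A l j) * Rabs (yN j)))).
    2:{ intros l _. rewrite <- fsum_scal. apply fsum_ext. intros; ring. }
    rewrite fsum_swap. rewrite <- fsum_scal. apply fsum_le. intros j Hj.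
    rewrite (fsum_scal_r m (Rabs (yN j)) (fun l => alpha l * Rabs (A l j))). apply Rmult_le_compat_r. apply Rabs_pos.
    unfold Kb. apply (fsum_single_le n (fun j => fsum m (fun l => alpha l * Rabs (A l j))) j); auto.
    intros; apply fsum_nonneg; intros. unfold alpha. apply Rmult_le_pos; [apply fsum_nonneg; intros|]; apply Rabs_pos. }
  assert (HN: 2 * Kb * fsum n (fun j => Rabs (yN j)) <= lam * pq_q n r g p q yN).
  { assert (Hj: forall j, (j < n)%nat -> K * Rabs (yN j) <= lam * pq_q n r g p q yN).
    { intros j Hj. eapply Rle_trans. apply (small_pow q lam K (Rabs (yN j)) Hq0 Hq1 Hl HK (Rabs_pos _)).
      unfold yN, partN. destruct (supp xbar j) eqn:E. rewrite Rabs_R0. auto.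
      rewrite <- (Rminus_0_r (y j)). rewrite <- (Hz0 j Hj E). eapply Rlt_le_trans. apply Hyc; auto. apply Rmin_r.
      apply Rmult_le_compat_l. lra. apply pq_term_ge; auto. }
    assert (fsum n (fun j => K * Rabs (yN j)) <= fsum n (fun _ => lam * pq_q n r g p q yN)) by (apply fsum_le; auto).
    rewrite fsum_scal in H. rewrite (fsum_ext n (fun _ => lam * pq_q n r g p q yN) (fun _ => lam * pq_q n r g p q yN * 1)) in H by (intros; ring).
    rewrite fsum_scal in H.
    assert (fsum n (fun _ => 1) = INR n). { clear. induction n. simpl; auto. rewrite S_INR. cbn [fsum]. rewrite IHn. ring. }
    rewrite H0 in H. unfold K in H.
    pose proof (pq_nonneg n r g p q yN). pose proof (pos_INR n).
    assert (0 <= fsum n (fun j => Rabs (yN j))) by (apply fsum_nonneg; intros; apply Rabs_pos).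
    assert (0 <= 2 * Kb * fsum n (fun j => Rabs (yN j))) by nra.
    assert (2 * Kb * fsum n (fun j => Rabs (yN j)) * (INR n + 1) <= lam * pq_q n r g p q yN * (INR n + 1)) by nra.
    apply Rmult_le_reg_r in H5; lra. }
  unfold Flam at 2. rewrite Hsplit.
  assert (HFT: Flam m n r g p q A xbar lam yT = norm2sq m a + lam * pq_q n r g p q yT) by auto.
  assert (Hab2: - (Kb * fsum n (fun j => Rabs (yN j))) <= fsum m (fun l => a l * b l)).
  { pose proof (Rle_abs (- fsum m (fun l => a l * b l))). rewrite Rabs_Ropp in H. lra. }
  rewrite HFT in HT. lra.
Qed.

Lemma matvec_minus n A x y l : matvec n A x l - matvec n A y l = matvec n A (fun j => x j - y j) l.
Proof. unfold matvec. rewrite <- fsum_minus. apply fsum_ext. intros; ring. Qed.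

Lemma norm2sq_nonneg m v : 0 <= norm2sq m v.
Proof. apply fsum_nonneg. intros; apply pow2_ge_0. Qed.

Lemma abs_le_sqrt_norm m v l : (l < m)%nat -> Rabs (v l) <= sqrt (norm2sq m v).
Proof. intros Hl. rewrite <- sqrt_pow2_abs. apply sqrt_le_1_alt.
  apply (fsum_single_le m (fun l => v l ^ 2) l); auto. intros; apply pow2_ge_0. Qed.

Lemma hsum_bound n r g p q xbar z c rho : is_partition n r g -> 1 <= p -> 0 < q -> q < 1 ->
  (forall i, (i < r)%nat -> group_nonzero n g xbar i -> group_active n g xbar i) ->
  1 < c -> Rpower c (2 * p) = 2 -> 0 <= rho ->
  (forall j, (j < n)%nat -> supp xbar j = true -> rho <= (1 - / c) * Rabs (xbar j)) ->
  (forall j, (j < n)%nat -> supp xbar j = true -> Rabs (z j - xbar j) <= rho) ->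
  fsum n (fun k => if supp xbar k then hk n g p q z k ^ 2 else 0) <=
  4 * q ^ 2 * num_nonzero_groups n r g xbar * max_term n r g p q xbar.
Proof. intros [Hpart _] Hp Hq0 Hq1 Hact Hc1 Hc2 Hr0 Hrho Hbox.
  rewrite (fsum_regroup n r g _ Hpart).
  apply Rle_trans with (fsum r (fun i => (if excluded_middle_informative (group_nonzero n g xbar i) then 1 else 0) * (4 * q ^ 2 * max_term n r g p q xbar))).
  2:{ rewrite fsum_scal_r. unfold num_nonzero_groups. right; ring. }
  apply fsum_le. intros i Hi.
  destruct (excluded_middle_informative (group_nonzero n g xbar i)) as [Hnz|Hz].
  - assert (Ha := Hact i Hi Hnz).
    set (G := rpow (gnorm n g p xbar i) (2 * (q - p))).
    apply Rle_trans with (fsum n (fun k => if Nat.eqb (g k) i then 4 * q ^ 2 * (G * rpow (Rabs (xbar k)) (2 * p - 2)) else 0)).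
    + apply fsum_le. intros k Hk. destruct (Nat.eqb_spec (g k) i); [|lra].
      destruct (supp xbar k) eqn:E.
      * unfold G. rewrite <- e. apply (hk_bound n g p q xbar z k c); auto.
        intros j Hj Hgj. assert (xbar j <> 0) by (apply Ha; auto; lia). split; auto.
        apply (ratio_of_box c (xbar j) (z j) rho); auto. apply Hrho; auto. apply supp_true; auto.
        apply Hbox; auto. apply supp_true; auto.
      * apply Rmult_le_pos. pose proof (pow2_ge_0 q); lra. apply Rmult_le_pos; apply rpow_nonneg.
    + rewrite (fsum_ext n _ (fun k => (4 * q ^ 2 * G) * (if Nat.eqb (g k) i then rpow (Rabs (xbar k)) (2 * p - 2) else 0))).
      2:{ intros k _. destruct (Nat.eqb (g k) i); ring. }
      rewrite fsum_scal. rewrite Rmult_1_l.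
      pose proof (fmax_ge r (fun i =>
        if excluded_middle_informative (group_nonzero n g xbar i) then
          rpow (gnorm n g p xbar i) (2 * (q - p)) *
          fsum n (fun j => if Nat.eqb (g j) i then rpow (Rabs (xbar j)) (2 * p - 2) else 0)
        else 0) i Hi) as Hm. simpl in Hm.
      destruct (excluded_middle_informative (group_nonzero n g xbar i)); [|tauto].
      unfold max_term. fold G in Hm. rewrite Rmult_assoc. apply Rmult_le_compat_l.
      pose proof (pow2_ge_0 q); lra. auto.
  - rewrite fsum_zero. rewrite Rmult_0_l. lra.
    intros k Hk. destruct (Nat.eqb_spec (g k) i); auto. destruct (supp xbar k) eqn:E; auto.
    exfalso. apply Hz. exists k. repeat split; auto. apply supp_true; auto. Qed.

Lemma supp_norm_ext n xbar v w : (forall j, (j < n)%nat -> supp xbar j = true -> v j = w j) ->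
  supp_norm n xbar v = supp_norm n xbar w.
Proof. intros H. unfold supp_norm. f_equal. apply fsum_ext. intros j Hj.
  destruct (supp xbar j) eqn:E; auto. rewrite H; auto. Qed.

Lemma per_lambda m n r g p q A xbar C rho c lam :
  is_partition n r g -> 0 < q -> q < 1 -> 1 <= p ->
  (forall i, (i < r)%nat -> group_nonzero n g xbar i -> group_active n g xbar i) ->
  is_inverse_on_supp m n A xbar C ->
  1 < c -> Rpower c (2 * p) = 2 ->
  0 < rho -> rho <= 1 -> (forall j, (j < n)%nat -> supp xbar j = true -> rho <= (1 - / c) * Rabs (xbar j)) ->
  0 < lam ->
  (fsum n (fun i => fsum n (fun k => Rabs (C i k) * fsum m (fun l => Rabs (A l k)))))^2 * lam * pq_q n r g p q xbar < (rho / 2) ^ 2 ->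
  exists z, local_minimizer n (Flam m n r g p q A xbar lam) z /\
        norm2sq n (fun j => z j - xbar j) <=
          lam ^ 2 * q ^ 2 * num_nonzero_groups n r g xbar
          * (spec_norm n xbar C) ^ 2 * max_term n r g p q xbar.
Proof.
  intros Hpart Hq0 Hq1 Hp Hact Hinv Hc1 Hc2 Hr0 Hr1 Hrho Hl Hsmall.
  assert (Hp0: 0 < p) by lra.
  set (Kc := fsum n (fun i => fsum n (fun k => Rabs (C i k) * fsum m (fun l => Rabs (A l k))))) in Hsmall.
  set (F := Flam m n r g p q A xbar lam).
  destruct (EVT_nat n F (boxlo xbar rho) (boxhi xbar rho)) as [z [Hzb [Hz0 Hzmin]]].
  { intros j. unfold boxlo, boxhi. destruct (supp xbar j); lra. }
  { apply Flam_cts; lra. }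
  assert (HzT: forall j, (j < n)%nat -> supp xbar j = true -> Rabs (z j - xbar j) <= rho).
  { intros j Hj E. destruct (Hzb j Hj) as [H1 H2]. unfold boxlo, boxhi in *. rewrite E in *.
    apply Rabs_le. lra. }
  assert (HzN: forall j, (j < n)%nat -> supp xbar j = false -> z j = 0).
  { intros j Hj E. destruct (Hzb j Hj) as [H1 H2]. unfold boxlo, boxhi in *. rewrite E in *. lra. }
  set (d := fun j => z j - xbar j).
  assert (Hd0: forall j, (j < n)%nat -> supp xbar j = false -> d j = 0).
  { intros j Hj E. unfold d. rewrite HzN by auto. apply supp_false in E. rewrite E. ring. }
  set (Q := norm2sq m (fun l => matvec n A z l - matvec n A xbar l)).
  assert (HQ: Q <= lam * pq_q n r g p q xbar).
  { set (xb' := fun j => if Nat.ltb j n then xbar j else 0).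
    assert (F z <= F xb').
    { apply Hzmin.
      - intros j Hj. unfold xb', boxlo, boxhi. destruct (Nat.ltb_spec j n); [|lia].
        destruct (supp xbar j) eqn:E. lra. apply supp_false in E. lra.
      - intros j Hj. unfold xb'. destruct (Nat.ltb_spec j n); [lia|auto]. }
    assert (F xb' = F xbar).
    { apply Flam_ext. intros j Hj. unfold xb'. destruct (Nat.ltb_spec j n); [auto|lia]. }
    assert (F xbar = lam * pq_q n r g p q xbar).
    { unfold F, Flam. unfold norm2sq. rewrite fsum_zero. ring. intros; ring. }
    assert (F z = Q + lam * pq_q n r g p q z) by reflexivity. pose proof (pq_nonneg n r g p q z).
    assert (0 <= lam * pq_q n r g p q z) by (apply Rmult_le_pos; [lra| apply pq_nonneg]). lra. }
  assert (HQd: forall l, matvec n A z l - matvec n A xbar l = matvec n A d l) by (intros; apply matvec_minus).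
  assert (Hint: forall i, (i < n)%nat -> supp xbar i = true -> Rabs (z i - xbar i) < rho / 2).
  { intros i Hi E. fold (d i). rewrite (inv_identity m n A xbar C d i Hinv Hd0 Hi E).
    assert (B: Rabs (fsum n (fun k => if supp xbar k then C i k * fsum m (fun l => A l k * matvec n A d l) else 0))
               <= fsum n (fun k => Rabs (C i k) * fsum m (fun l => Rabs (A l k))) * sqrt Q).
    { eapply Rle_trans. apply fsum_abs. rewrite <- fsum_scal_r. apply fsum_le. intros k Hk.
      destruct (supp xbar k).
      - rewrite Rabs_mult, Rmult_assoc. apply Rmult_le_compat_l. apply Rabs_pos.
        eapply Rle_trans. apply fsum_abs. rewrite <- fsum_scal_r. apply fsum_le. intros l Hl'.
        rewrite Rabs_mult. apply Rmult_le_compat_l. apply Rabs_pos.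
        rewrite <- HQd. unfold Q. apply (abs_le_sqrt_norm m (fun l => matvec n A z l - matvec n A xbar l)); auto.
      - rewrite Rabs_R0. apply Rmult_le_pos. apply Rmult_le_pos. apply Rabs_pos. apply fsum_nonneg; intros; apply Rabs_pos. apply sqrt_pos. }
    assert (B2: fsum n (fun k => Rabs (C i k) * fsum m (fun l => Rabs (A l k))) <= Kc).
    { unfold Kc. apply (fsum_single_le n (fun i => fsum n (fun k => Rabs (C i k) * fsum m (fun l => Rabs (A l k)))) i); auto.
      intros; apply fsum_nonneg; intros; apply Rmult_le_pos; [apply Rabs_pos| apply fsum_nonneg; intros; apply Rabs_pos]. }
    assert (HQ0: 0 <= Q) by apply norm2sq_nonneg.
    assert (HK0: 0 <= fsum n (fun k => Rabs (C i k) * fsum m (fun l => Rabs (A l k))))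
      by (apply fsum_nonneg; intros; apply Rmult_le_pos; [apply Rabs_pos| apply fsum_nonneg; intros; apply Rabs_pos]).
    assert (B3: Rabs (fsum n (fun k => if supp xbar k then C i k * fsum m (fun l => A l k * matvec n A d l) else 0)) <= Kc * sqrt Q).
    { eapply Rle_trans. apply B. apply Rmult_le_compat_r. apply sqrt_pos. auto. }
    set (u := Rabs (fsum n (fun k => if supp xbar k then C i k * fsum m (fun l => A l k * matvec n A d l) else 0))) in *.
    assert (u ^ 2 <= Kc ^ 2 * Q).
    { assert (0 <= u) by apply Rabs_pos. assert (u ^ 2 <= (Kc * sqrt Q) ^ 2) by (apply pow_incr; lra).
      rewrite Rpow_mult_distr in H0. rewrite pow2_sqrt in H0 by auto. auto. }
    assert (Kc ^ 2 * Q <= Kc ^ 2 * lam * pq_q n r g p q xbar).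
    { rewrite Rmult_assoc. apply Rmult_le_compat_l. apply pow2_ge_0. auto. }
    assert (0 <= u) by apply Rabs_pos.
    destruct (Rlt_dec u (rho / 2)); auto. exfalso.
    assert ((rho / 2) ^ 2 <= u ^ 2) by (apply pow_incr; lra). lra. }
  exists z. split.
  { apply (local_min_step m n r g p q A xbar lam z rho); auto; lra. }
  assert (Hgr: forall k, (k < n)%nat -> (g k < r)%nat) by (destruct Hpart; auto).
  set (h := fun k => hk n g p q z k).
  assert (HFO: forall k, (k < n)%nat -> supp xbar k = true ->
     fsum m (fun l => A l k * matvec n A d l) = - (lam / 2) * h k).
  { intros k Hk E.
    assert (Hxk: rho < Rabs (xbar k)).
    { assert (Hxk0: 0 < Rabs (xbar k)) by (apply Rabs_pos_lt; apply supp_true; auto).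
      assert (0 < / c) by (apply Rinv_0_lt_compat; lra).
      pose proof (Hrho k Hk E). nra. }
    assert (HFk := first_order m n r g p q A xbar lam z k (rho / 2) Hp0 Hq0 Hk (Hgr k Hk) ltac:(lra)).
    assert (Hpertbox: forall t, Rabs t < rho / 2 -> Rabs (z k + t - xbar k) < rho).
    { intros t Ht. pose proof (Hint k Hk E). replace (z k + t - xbar k) with ((z k - xbar k) + t) by ring.
      eapply Rle_lt_trans. apply Rabs_triang. lra. }
    assert (2 * fsum m (fun l => (matvec n A z l - matvec n A xbar l) * A l k) + lam * hk n g p q z k = 0).
    { apply HFk.
      - intros t Ht E0. pose proof (Hpertbox t Ht). rewrite E0 in H. rewrite Rminus_0_l, Rabs_Ropp in H. lra.
      - intros t Ht. apply Hzmin.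
        + intros j Hj. unfold pert. destruct (Nat.eqb_spec j k).
          * subst j. unfold boxlo, boxhi. rewrite E. pose proof (Hpertbox t Ht). apply Rabs_def2 in H. lra.
          * rewrite Rplus_0_r. apply Hzb; auto.
        + intros j Hj. unfold pert. destruct (Nat.eqb_spec j k). lia. rewrite Hz0 by auto. ring. }
    rewrite (fsum_ext m _ (fun l => (matvec n A z l - matvec n A xbar l) * A l k)).
    unfold h. lra. intros l _. rewrite HQd. ring. }
  assert (Hdrep: forall i, (i < n)%nat -> supp xbar i = true -> d i = - (lam / 2) * Cv n xbar C h i).
  { intros i Hi E. rewrite (inv_identity m n A xbar C d i Hinv Hd0 Hi E). unfold Cv. rewrite <- fsum_scal.
    apply fsum_ext. intros k Hk. destruct (supp xbar k) eqn:Ek. rewrite HFO by auto. ring. ring. }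
  assert (Hn2: norm2sq n d = supp_norm n xbar d ^ 2).
  { unfold supp_norm. rewrite pow2_sqrt by apply supp_sum_nonneg. unfold norm2sq. apply fsum_ext.
    intros j Hj. destruct (supp xbar j) eqn:E; auto. rewrite Hd0 by auto. ring. }
  destruct (spec_norm_prop n xbar C) as [Hsp0 Hsp].
  assert (Hsd: supp_norm n xbar d <= lam / 2 * spec_norm n xbar C * supp_norm n xbar h).
  { rewrite (supp_norm_ext n xbar d (fun i => - (lam / 2) * Cv n xbar C h i)) by auto.
    rewrite supp_norm_scale. rewrite Rabs_Ropp, Rabs_pos_eq by lra. rewrite Rmult_assoc.
    apply Rmult_le_compat_l. lra. auto. }
  assert (Hsh: supp_norm n xbar h ^ 2 <= 4 * q ^ 2 * num_nonzero_groups n r g xbar * max_term n r g p q xbar).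
  { unfold supp_norm. rewrite pow2_sqrt by apply supp_sum_nonneg.
    apply (hsum_bound n r g p q xbar z c rho); auto; lra. }
  fold d. rewrite Hn2.
  assert (0 <= supp_norm n xbar d) by apply sqrt_pos.
  assert (supp_norm n xbar d ^ 2 <= (lam / 2 * spec_norm n xbar C * supp_norm n xbar h) ^ 2) by (apply pow_incr; lra).
  eapply Rle_trans. apply H0.
  rewrite !Rpow_mult_distr.
  assert (0 <= (lam / 2) ^ 2 * spec_norm n xbar C ^ 2) by (apply Rmult_le_pos; apply pow2_ge_0).
  apply Rle_trans with ((lam / 2) ^ 2 * spec_norm n xbar C ^ 2 * (4 * q ^ 2 * num_nonzero_groups n r g xbar * max_term n r g p q xbar)).
  apply Rmult_le_compat_l; auto. right; field.
Qed.

Theorem theorem2p2 (m n r : nat) (g : nat -> nat) (p q : R)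
  (A : nat -> nat -> R) (xbar : nat -> R) (C : nat -> nat -> R) :
  is_partition n r g ->
  0 < q -> q < 1 -> 1 <= p ->
  (forall i, (i < r)%nat -> group_nonzero n g xbar i -> group_active n g xbar i) ->
  (* columns of A indexed by the nonzero components of xbar are linearly independent *)
  (forall v : nat -> R,
     (forall j, (j < n)%nat -> xbar j = 0 -> v j = 0) ->
     (forall l, (l < m)%nat -> matvec n A v l = 0) ->
     forall j, (j < n)%nat -> v j = 0) ->
  (* C = (B^T B)^{-1} *)
  is_inverse_on_supp m n A xbar C ->
  exists kappa, 0 < kappa /\
    exists xstar : R -> nat -> R,
      forall lam, 0 < lam < kappa ->
        local_minimizer n (Flam m n r g p q A xbar lam) (xstar lam) /\
        norm2sq n (fun j => xstar lam j - xbar j) <=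
          lam ^ 2 * q ^ 2 * num_nonzero_groups n r g xbar
          * (spec_norm n xbar C) ^ 2 * max_term n r g p q xbar.
Proof.
  intros Hpart Hq0 Hq1 Hp Hact _ Hinv.
  set (c := Rpower 2 (1 / (2 * p))).
  assert (Hc1: 1 < c).
  { unfold c, Rpower. pose proof ln_lt_2.
    assert (0 < 1 / (2 * p) * ln 2) by (apply Rmult_lt_0_compat; [apply Rdiv_lt_0_compat; lra| lra]).
    pose proof (exp_increasing _ _ H0). rewrite exp_0 in H1. auto. }
  assert (Hc2: Rpower c (2 * p) = 2).
  { unfold c. rewrite Rpower_mult. replace (1 / (2 * p) * (2 * p)) with 1 by (field; lra). apply Rpower_1; lra. }
  destruct (exists_rho n (fun j => supp xbar j = true) (fun j => (1 - / c) * Rabs (xbar j))) as [rho [Hr0 [Hr1 Hrho]]].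
  { intros j Hj E. apply Rmult_lt_0_compat.
    assert (/ c < 1). { rewrite <- Rinv_1. apply Rinv_lt_contravar; lra. } lra.
    apply Rabs_pos_lt. apply supp_true; auto. }
  set (Kc := fsum n (fun i => fsum n (fun k => Rabs (C i k) * fsum m (fun l => Rabs (A l k))))).
  set (Phi := pq_q n r g p q xbar).
  assert (HM: 0 <= Kc ^ 2 * Phi) by (apply Rmult_le_pos; [apply pow2_ge_0| apply pq_nonneg]).
  set (kappa := (rho / 2) ^ 2 / (Kc ^ 2 * Phi + 1)).
  assert (Hk: 0 < kappa) by (unfold kappa; apply Rdiv_lt_0_compat; [apply pow_lt; lra| lra]).
  exists kappa. split; auto.
  exists (fun lam => epsilon (inhabits (fun _ : nat => 0)) (fun z => 0 < lam < kappa ->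
        local_minimizer n (Flam m n r g p q A xbar lam) z /\
        norm2sq n (fun j => z j - xbar j) <=
          lam ^ 2 * q ^ 2 * num_nonzero_groups n r g xbar
          * (spec_norm n xbar C) ^ 2 * max_term n r g p q xbar)).
  intros lam Hlam.
  apply (epsilon_spec (inhabits (fun _ : nat => 0)) (fun z => 0 < lam < kappa ->
        local_minimizer n (Flam m n r g p q A xbar lam) z /\
        norm2sq n (fun j => z j - xbar j) <=
          lam ^ 2 * q ^ 2 * num_nonzero_groups n r g xbar
          * (spec_norm n xbar C) ^ 2 * max_term n r g p q xbar)); auto.
  destruct (per_lambda m n r g p q A xbar C rho c lam) as [z Hz]; auto; try lra.
  fold Kc. fold Phi.
  assert (lam * (Kc ^ 2 * Phi) <= kappa * (Kc ^ 2 * Phi)) by (apply Rmult_le_compat_r; lra).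
  assert (kappa * (Kc ^ 2 * Phi) < (rho / 2) ^ 2).
  { unfold kappa. assert (0 < (rho/2)^2) by (apply pow_lt; lra).
    apply Rmult_lt_reg_r with (Kc ^ 2 * Phi + 1). lra.
    replace ((rho / 2) ^ 2 / (Kc ^ 2 * Phi + 1) * (Kc ^ 2 * Phi) * (Kc ^ 2 * Phi + 1)) with ((rho / 2) ^ 2 * (Kc ^ 2 * Phi)) by (field; lra).
    nra. }
  lra.
  exists z. auto.
Qed.
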